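(* Let $\mathfrak{S}=(\mathcal{X},\mathsf{S},\gamma,(\Lambda_{a})_{a\in\mathcal{A}})$ be a spectral decomposition system for the Euclidean space $\mathfrak{H}$, and let $\varphi\colon\mathcal{X}\to\left]-\infty,+\infty\right]$ be $\mathsf{S}$-invariant. Then: (i) $\varphi\circ\gamma$ is convex if and only if $\varphi$ is convex; (ii) if $\varphi$ is proper, then $\varphi\circ\gamma\in\Gamma_0(\mathfrak{H})$ if and only if $\varphi\in\Gamma_0(\mathcal{X})$.
   Context: A Euclidean space is a finite-dimensional real inner product space; inner products are written $\langle\cdot,\cdot\rangle$ and norms $\|\cdot\|$. Let $\mathfrak{H}$ and $\mathcal{X}$ be Euclidean spaces, let $\mathsf{S}$ be a group acting on $\mathcal{X}$ by linear isometries, let $\gamma\colon\mathfrak{H}\to\mathcal{X}$, and let $(\Lambda_a)_{a\in\mathcal{A}}$ be a family of linear operators from $\mathcal{X}$ to $\mathfrak{H}$. The orbit of $x$ is $\mathsf{S}\cdot x=\{s\cdot x: s\in\mathsf{S}\}$; a map $f$ on $\mathcal{X}$ is $\mathsf{S}$-invariant if $f(s\cdot x)=f(x)$ for all $s\in\mathsf{S}$, $x\in\mathcal{X}$. The tuple is a spectral decomposition system for $\mathfrak{H}$ if: [A] every $\Lambda_a$ is an isometry; [B] there exists an $\mathsf{S}$-invariant $\tau\colon\mathcal{X}\to\mathcal{X}$ with $\tau(x)\in\mathsf{S}\cdot x$ for all $x$ and $\gamma\circ\Lambda_a=\tau$ for all $a$; [C] for every $X\in\mathfrak{H}$ there is $a$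 with $X=\Lambda_a\gamma(X)$; [D] $\langle X,Y\rangle\leq\langle\gamma(X),\gamma(Y)\rangle$ for all $X,Y\in\mathfrak{H}$. For a function $f$ on a Euclidean space, $\operatorname{dom}f=\{x: f(x)<+\infty\}$; $f$ is convex if $f(\alpha x+(1-\alpha)y)\leq\alpha f(x)+(1-\alpha)f(y)$ for all $x,y\in\operatorname{dom}f$, $\alpha\in\left]0,1\right[$; $f$ is proper if it never takes $-\infty$ and $\operatorname{dom}f\neq\varnothing$; $\Gamma_0(\mathcal{H})$ is the set of proper lower semicontinuous convex functions $\mathcal{H}\to\left]-\infty,+\infty\right]$. *)

(* Defs.v *)
From HB Require Import structures.
From mathcomp Require Import all_boot all_order all_algebra.
From mathcomp Require Import all_classical all_reals all_analysis.
Set Implicit Arguments. Unset Strict Implicit. Unset Printing Implicit Defensive.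
Import Order.TTheory GRing.Theory Num.Theory.
Import numFieldNormedType.Exports.
Local Open Scope classical_set_scope.
Local Open Scope ring_scope.

(* Euclidean spaces are modelled as 'rV[R]_n with the standard inner product
   (every Euclidean space is isometrically isomorphic to one of these). *)
Definition dotv (R : realType) (n : nat) (u v : 'rV[R]_n) : R := (u *m v^T) 0 0.
Definition eucnorm (R : realType) (n : nat) (u : 'rV[R]_n) : R :=
  Num.sqrt (dotv u u).

Definition is_linear_map (R : realType) (m n : nat) (f : 'rV[R]_m -> 'rV[R]_n) :=
  forall (c : R) (u v : 'rV[R]_m), f (c *: u + v) = c *: f u + f v.

Definition is_isometry (R : realType) (m n : nat) (f : 'rV[R]_m -> 'rV[R]_n) :=
  forall u, eucnorm (f u) = eucnorm u.

Definition is_group (G : Type) (mul : G -> G -> G) (one : G) (inv : G -> G) :=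
  [/\ forall a b c, mul a (mul b c) = mul (mul a b) c,
      forall a, mul one a = a /\ mul a one = a &
      forall a, mul (inv a) a = one /\ mul a (inv a) = one].

Definition is_isometric_linear_action (R : realType) (m : nat) (G : Type)
    (mul : G -> G -> G) (one : G) (act : G -> 'rV[R]_m -> 'rV[R]_m) :=
  [/\ forall x, act one x = x,
      forall s t x, act (mul s t) x = act s (act t x),
      forall s, is_linear_map (act s) &
      forall s, is_isometry (act s)].

Definition orbit (R : realType) (m : nat) (G : Type)
    (act : G -> 'rV[R]_m -> 'rV[R]_m) (x : 'rV[R]_m) : set 'rV[R]_m :=
  [set act s x | s in [set: G]].

Definition S_invariant (R : realType) (m : nat) (G : Type) (T : Type)
    (act : G -> 'rV[R]_m -> 'rV[R]_m) (f : 'rV[R]_m -> T) :=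
  forall s x, f (act s x) = f x.

Definition spectral_decomposition_system (R : realType) (n m : nat)
    (G : Type) (mul : G -> G -> G) (one : G) (inv : G -> G)
    (act : G -> 'rV[R]_m -> 'rV[R]_m)
    (gamma : 'rV[R]_n -> 'rV[R]_m) (A : Type)
    (Lambda : A -> 'rV[R]_m -> 'rV[R]_n) :=
  [/\ is_group mul one inv,
      is_isometric_linear_action mul one act,
      forall a, is_linear_map (Lambda a) &
    [/\ forall a, is_isometry (Lambda a),
      (exists tau : 'rV[R]_m -> 'rV[R]_m,
                  [/\ S_invariant act tau,
                      forall x, orbit act x (tau x) &
                      forall a x, gamma (Lambda a x) = tau x]),
      (forall X, exists a, X = Lambda a (gamma X)) &
      forall X Y, dotv X Y <= dotv (gamma X) (gamma Y)]].

Local Open Scope ereal_scope.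

Definition edom (R : realType) (n : nat) (f : 'rV[R]_n -> \bar R) :
  set 'rV[R]_n := [set x | f x < +oo].

Definition econvex (R : realType) (n : nat) (f : 'rV[R]_n -> \bar R) :=
  forall x y (al : R), edom f x -> edom f y -> (0 < al < 1)%R ->
    f (al *: x + (1 - al) *: y)%R <= al%:E * f x + (1 - al)%:E * f y.

Definition eproper (R : realType) (n : nat) (f : 'rV[R]_n -> \bar R) :=
  (forall x, f x != -oo) /\ edom f !=set0.

Definition Gamma0 (R : realType) (n : nat) (f : 'rV[R]_n -> \bar R) :=
  [/\ eproper f, lower_semicontinuous f & econvex f].

(* Main.v *)
Require Import Defs.
From HB Require Import structures.
From mathcomp Require Import all_boot all_order all_algebra.
From mathcomp Require Import all_classical all_reals all_analysis.
From mathcomp Require Import ring lra.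
Set Implicit Arguments. Unset Strict Implicit. Unset Printing Implicit Defensive.
Import Order.TTheory GRing.Theory Num.Theory.
Import numFieldNormedType.Exports.
Local Open Scope classical_set_scope.
Local Open Scope ring_scope.
Section LinAlg.
Variable R : realType.

Lemma dotvE n (u v : 'rV[R]_n) : dotv u v = \sum_j u 0 j * v 0 j.
Proof. by rewrite /dotv !mxE; apply: eq_bigr => j _; rewrite mxE. Qed.

Lemma dotvC n (u v : 'rV[R]_n) : dotv u v = dotv v u.
Proof. by rewrite !dotvE; apply: eq_bigr => j _; rewrite mulrC. Qed.

Lemma dotvDl n (u v w : 'rV[R]_n) : dotv (u + v) w = dotv u w + dotv v w.
Proof. by rewrite !dotvE -big_split /=; apply: eq_bigr => j _; rewrite !mxE mulrDl. Qed.

Lemma dotvZl n a (u w : 'rV[R]_n) : dotv (a *: u) w = a * dotv u w.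
Proof. by rewrite !dotvE mulr_sumr; apply: eq_bigr => j _; rewrite !mxE mulrA. Qed.

Lemma dotvNl n (u w : 'rV[R]_n) : dotv (- u) w = - dotv u w.
Proof. by rewrite -scaleN1r dotvZl mulN1r. Qed.

Lemma dotvBl n (u v w : 'rV[R]_n) : dotv (u - v) w = dotv u w - dotv v w.
Proof. by rewrite dotvDl dotvNl. Qed.

Lemma dotvDr n (u v w : 'rV[R]_n) : dotv w (u + v) = dotv w u + dotv w v.
Proof. by rewrite dotvC dotvDl !(dotvC w). Qed.

Lemma dotvZr n a (u w : 'rV[R]_n) : dotv w (a *: u) = a * dotv w u.
Proof. by rewrite dotvC dotvZl dotvC. Qed.

Lemma dotvBr n (u v w : 'rV[R]_n) : dotv w (u - v) = dotv w u - dotv w v.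
Proof. by rewrite dotvC dotvBl !(dotvC w). Qed.

Lemma dotv0l n (w : 'rV[R]_n) : dotv 0 w = 0.
Proof. by rewrite -(scale0r 0) dotvZl mul0r. Qed.

Lemma dotv0r n (w : 'rV[R]_n) : dotv w 0 = 0.
Proof. by rewrite dotvC dotv0l. Qed.

Lemma dotv_ge0 n (u : 'rV[R]_n) : 0 <= dotv u u.
Proof. by rewrite dotvE; apply: sumr_ge0 => j _; rewrite -expr2 sqr_ge0. Qed.

Lemma dotv_eq0 n (u : 'rV[R]_n) : dotv u u = 0 -> u = 0.
Proof.
rewrite dotvE => /eqP; rewrite psumr_eq0 => [/allP H|j _]; last by rewrite -expr2 sqr_ge0.
apply/rowP => j; rewrite mxE; have := H j (mem_index_enum j).
by rewrite implyTb -expr2 sqrf_eq0 => /eqP.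
Qed.

Lemma dotv_ext n (u v : 'rV[R]_n) : (forall c, dotv c u = dotv c v) -> u = v.
Proof.
move=> H; apply/eqP; rewrite -subr_eq0; apply/eqP/dotv_eq0.
by rewrite dotvBr H subrr.
Qed.

Lemma linear0 p q (f : 'rV[R]_p -> 'rV[R]_q) : is_linear_map f -> f 0 = 0.
Proof.
move=> Hf; have := Hf 1 0 0; rewrite !scale1r addr0 => H.
by apply: (@addrI _ (f 0)); rewrite addr0 -H.
Qed.

Lemma linearD' p q (f : 'rV[R]_p -> 'rV[R]_q) : is_linear_map f ->
  forall u v, f (u + v) = f u + f v.
Proof. by move=> Hf u v; have := Hf 1 u v; rewrite !scale1r. Qed.

Lemma linearZ' p q (f : 'rV[R]_p -> 'rV[R]_q) : is_linear_map f ->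
  forall a u, f (a *: u) = a *: f u.
Proof. by move=> Hf a u; rewrite -(addr0 (a *: u)) Hf (linear0 Hf) addr0. Qed.

Lemma linearB' p q (f : 'rV[R]_p -> 'rV[R]_q) : is_linear_map f ->
  forall u v, f (u - v) = f u - f v.
Proof.
by move=> Hf u v; rewrite -scaleN1r linearD' // linearZ' // scaleN1r.
Qed.

Lemma isometry_dot p q (f : 'rV[R]_p -> 'rV[R]_q) : is_linear_map f ->
  is_isometry f -> forall u v, dotv (f u) (f v) = dotv u v.
Proof.
move=> Hl Hi.
have Hn u : dotv (f u) (f u) = dotv u u.
  have := Hi u; rewrite /eucnorm => /eqP; rewrite eqr_sqrt ?dotv_ge0 //.
  by move/eqP.
move=> u v; have := Hn (u + v); rewrite linearD' // !dotvDl !dotvDr !Hn.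
rewrite (dotvC (f v)) (dotvC v) => H.
lra.
Qed.

Definition fmat p q (f : 'rV[R]_p -> 'rV[R]_q) : 'M[R]_(p, q) :=
  \matrix_(i, j) f (delta_mx 0 i) 0 j.

Lemma fmatE p q (f : 'rV[R]_p -> 'rV[R]_q) : is_linear_map f ->
  forall x, f x = x *m fmat f.
Proof.
move=> Hf x; rewrite {1}(row_sum_delta x).
rewrite (@big_morph _ _ f 0 +%R 0 +%R) ?(linear0 Hf) //; last exact: linearD' Hf.
apply/rowP => j; rewrite !mxE summxE; apply: eq_bigr => i _.
by rewrite linearZ' // !mxE.
Qed.

Definition adj p q (f : 'rV[R]_p -> 'rV[R]_q) (X : 'rV[R]_q) : 'rV[R]_p :=
  X *m (fmat f)^T.

Lemma adjP p q (f : 'rV[R]_p -> 'rV[R]_q) : is_linear_map f ->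
  forall c X, dotv c (adj f X) = dotv (f c) X.
Proof.
move=> Hf c X; rewrite /dotv /adj (fmatE Hf) trmx_mul trmxK.
by rewrite mulmxA.
Qed.

Lemma adj_lin p q (f : 'rV[R]_p -> 'rV[R]_q) a X Y :
  adj f (a *: X + Y) = a *: adj f X + adj f Y.
Proof. by rewrite /adj mulmxDl scalemxAl. Qed.

Lemma adj_iso p q (f : 'rV[R]_p -> 'rV[R]_q) : is_linear_map f ->
  is_isometry f -> forall x, adj f (f x) = x.
Proof.
move=> Hl Hi x; apply: dotv_ext => c.
by rewrite adjP // isometry_dot.
Qed.

End LinAlg.
Section Topo.
Variable R : realType.

Lemma coord_le_norm p (v : 'rV[R]_p) j : `|v 0 j| <= `|v|.
Proof.
rewrite [X in _ <= X]/Num.norm /= mx_normrE.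
exact: (le_bigmax _ (fun ij : 'I_1 * 'I_p => `|v ij.1 ij.2|) (0, j)).
Qed.

Lemma norm_le_dot p (v : 'rV[R]_p) : `|v| ^+ 2 <= dotv v v.
Proof.
have H : `|v| <= Num.sqrt (dotv v v).
  rewrite [X in X <= _]/Num.norm /= mx_normrE.
  apply: bigmax_le; first exact: sqrtr_ge0.
  move=> [i j] _ /=; rewrite (ord1 i).
  rewrite -ler_sqr ?nnegrE ?sqrtr_ge0 // sqr_sqrtr ?dotv_ge0 // real_normK ?num_real //.
  rewrite dotvE (bigD1 j) //= -expr2 lerDl.
  by apply: sumr_ge0 => k _; rewrite -expr2 sqr_ge0.
have := H; rewrite -ler_sqr ?nnegrE ?sqrtr_ge0 // sqr_sqrtr ?dotv_ge0 //.
Qed.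

Lemma dot_le_norm p (v : 'rV[R]_p) : dotv v v <= p%:R * `|v| ^+ 2.
Proof.
rewrite dotvE.
have -> : p%:R * `|v| ^+ 2 = \sum_(j < p) `|v| ^+ 2.
  by rewrite sumr_const card_ord mulr_natl.
apply: ler_sum => j _; rewrite -expr2 -real_normK ?num_real //.
by rewrite ler_sqr ?nnegrE ?normr_ge0 // coord_le_norm.
Qed.

Lemma lip_cont p q (f : 'rV[R]_p -> 'rV[R]_q) :
  (forall x y, dotv (f x - f y) (f x - f y) <= dotv (x - y) (x - y)) ->
  continuous f.
Proof.
move=> Hf x; apply/(@cvgrPdist_lt _ _ _ (nbhs x) (nbhs_filter x)) => e e0.
have d0 : 0 < e / (p%:R + 1) by rewrite divr_gt0 // ltr_wpDl.
near=> t.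
have Ht : `|x - t| < e / (p%:R + 1).
  near: t; have := @near_ball _ _ x _ d0.
  apply: filterS => y.
  by rewrite -ball_normE.
have H1 := norm_le_dot (f x - f t).
have H2 := Hf x t.
have H3 := dot_le_norm (x - t).
set a := `|x - t| in Ht H3; set b := `|f x - f t| in H1 *.
have a0 : 0 <= a by exact: normr_ge0.
have b0 : 0 <= b by exact: normr_ge0.
have p0 : 0 <= (p%:R : R) by [].
have Ht' : a * (p%:R + 1) < e by rewrite -ltr_pdivlMr // ltr_wpDl.
set P := (p%:R : R) in p0 H3 Ht'.
have H4 : b ^+ 2 <= P * a ^+ 2 := le_trans H1 (le_trans H2 H3).
have H5 : P * a ^+ 2 <= (a * (P + 1)) ^+ 2 by nra.
have H6 : (a * (P + 1)) ^+ 2 < e ^+ 2 by rewrite ltr_pXn2r // ?nnegrE; nra.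
have H7 : b ^+ 2 < e ^+ 2 by apply: le_lt_trans H6; apply: le_trans H5.
by move: H7; rewrite ltr_pXn2r // ?nnegrE ?ltW.
Unshelve. all: by end_near.
Qed.

End Topo.
Section Hull.
Variables (R : realType) (m : nat) (K : set 'rV[R]_m).

Fixpoint Cc k : set 'rV[R]_m :=
  if k is k'.+1 then
    [set x | exists t p z, (0 <= t <= 1) /\ Cc k' p /\ K z /\
                           x = (1 - t) *: p + t *: z]
  else K.

Lemma Cc_compact k : compact K -> compact (Cc k).
Proof.
move=> cK; elim: k => [//|k IH] /=.
pose F := fun q : R * ('rV[R]_m * 'rV[R]_m) => (1 - q.1) *: q.2.1 + q.1 *: q.2.2.
have -> : [set x | exists t p z, (0 <= t <= 1) /\ Cc k p /\ K z /\
                           x = (1 - t) *: p + t *: z] =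
          F @` (`[0, 1]%classic `*` (Cc k `*` K)).
  apply/seteqP; split => x.
    case=> t [p [z [t01 [Cp [Kz ->]]]]].
    by exists (t, (p, z)) => //; split => //=; rewrite in_itv.
  case=> [[t [p z]]] [/= t01 [Cp Kz]] <-; exists t, p, z.
  by move: t01; rewrite /= in_itv /=.
apply: continuous_compact; last first.
  by apply: compact_setX => //; [exact: segment_compact | exact: compact_setX].
apply: continuous_subspaceT => q.
have c1 : continuous (fun q : R * ('rV[R]_m * 'rV[R]_m) => q.1).
  by move=> ?; exact: cvg_fst.
have c2 : continuous (fun q : R * ('rV[R]_m * 'rV[R]_m) => q.2.1).
  move=> ?; apply: continuous_comp; [exact: cvg_snd | exact: cvg_fst].
have c3 : continuous (fun q : R * ('rV[R]_m * 'rV[R]_m) => q.2.2).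
  move=> ?; apply: continuous_comp; [exact: cvg_snd | exact: cvg_snd].
have -> : F = (fun q => (1 - q.1) *: q.2.1) + (fun q => q.1 *: q.2.2).
  by apply/funext => -[t [p z]].
apply: continuousD.
  apply: continuousZ; last exact: c2.
  apply: continuousB; last exact: c1.
  exact: cst_continuous.
apply: continuousZ; [exact: c1 | exact: c3].
Qed.

Lemma Cc_nonempty k : K !=set0 -> Cc k !=set0.
Proof.
move=> [z Kz]; elim: k => [|k [p Cp]] /=; first by exists z.
by exists ((1 - 0) *: p + 0 *: z), 0, p, z; rewrite lexx ler01.
Qed.

Lemma Cc_mono k : K !=set0 -> Cc k `<=` Cc k.+1.
Proof.
move=> [z Kz] p Cp /=; exists 0, p, z; rewrite lexx ler01; split => //.
by rewrite subr0 scale1r scale0r addr0.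
Qed.

Lemma Cc_le k k' : K !=set0 -> (k <= k')%N -> Cc k `<=` Cc k'.
Proof.
move=> K0; elim: k' => [|k' IH]; first by rewrite leqn0 => /eqP ->.
rewrite leq_eqVlt => /orP [/eqP -> //| ]; rewrite ltnS => /IH H.
by move=> x /H; apply: Cc_mono.
Qed.

Local Open Scope ereal_scope.
Lemma Cc_jensen (phi : 'rV[R]_m -> \bar R) (r : R) : econvex phi ->
  (forall z, K z -> phi z <= r%:E) -> forall k x, Cc k x -> phi x <= r%:E.
Proof.
move=> Hc HK; elim=> [|k IH] x /=; first exact: HK.
case=> t [p [z [/andP [t0 t1] [Cp [Kz ->]]]]].
have [->|tn0] := eqVneq t 0%R.
  by rewrite subr0 scale1r scale0r addr0; apply: IH.
have [->|tn1] := eqVneq t 1%R.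
  by rewrite subrr scale0r add0r scale1r; apply: HK.
have t0' : (0 < t)%R by rewrite lt_neqAle eq_sym tn0.
have t1' : (t < 1)%R by rewrite lt_neqAle tn1.
have Hp := IH p Cp; have Hz := HK z Kz.
have dp : edom phi p by rewrite /edom /=; apply: le_lt_trans Hp _; exact: ltry.
have dz : edom phi z by rewrite /edom /=; apply: le_lt_trans Hz _; exact: ltry.
have al01 : (0 < 1 - t < 1)%R by apply/andP; split; lra.
have := Hc p z (1 - t)%R dp dz al01.
have -> : (1 - (1 - t) = t)%R by ring.
move=> H; apply: le_trans H _.
have -> : r%:E = (1 - t)%:E * r%:E + t%:E * r%:E.
  by rewrite -!EFinM -EFinD; congr (_%:E); ring.
apply: leeD; apply: lee_wpmul2l => //; rewrite lee_fin; lra.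
Qed.

End Hull.
Section Cara.
Variables (R : realType) (m : nat) (K : set 'rV[R]_m).

Definition Sf k (x : 'rV[R]_m) := exists (l : 'I_k -> R) (z : 'I_k -> 'rV[R]_m),
  [/\ forall i, 0 <= l i, \sum_i l i = 1, forall i, K (z i) &
      x = \sum_i l i *: z i].

Lemma Sf_Cc k x : K !=set0 -> Sf k.+1 x -> Cc K k x.
Proof.
move=> K0; elim: k x => [|k IH] x [l [z [l0 l1 Kz ->]]] /=.
  by move: l1; rewrite !big_ord1 => ->; rewrite scale1r.
move: l1; rewrite !(big_ord_recr k.+1) /=.
set t := l ord_max.
set l' := fun i : 'I_k.+1 => l (widen_ord (leqnSn k.+1) i).
set z' := fun i : 'I_k.+1 => z (widen_ord (leqnSn k.+1) i).
move=> hs.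
have e1 : \sum_(i < k.+1) l (widen_ord (leqnSn k.+1) i) = \sum_i l' i by [].
have e2 : \sum_(i < k.+1) l (widen_ord (leqnSn k.+1) i) *: z (widen_ord (leqnSn k.+1) i)
   = \sum_i l' i *: z' i by [].
rewrite e1 in hs; rewrite e2.
have l'0 i : 0 <= l' i by exact: l0.
have s0 : 0 <= \sum_i l' i by apply: sumr_ge0.
have [t1|tn1] := eqVneq t 1.
  have hz : \sum_i l' i = 0 by move: hs; rewrite t1; lra.
  have Hz := psumr_eq0P (fun i _ => l'0 i) hz.
  have [p Cp] := Cc_nonempty k K0.
  exists 1, p, (z ord_max); rewrite lexx ler01; split => //.
  rewrite big1 ?add0r; last by move=> i _; rewrite Hz // scale0r.
  by rewrite t1 subrr scale0r add0r.
have t0 : 0 <= t by exact: l0.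
have tl1 : t < 1 by rewrite lt_neqAle tn1 /=; lra.
set s := 1 - t.
have sp : 0 < s by rewrite /s; lra.
exists t, (\sum_i (l' i / s) *: z' i), (z ord_max); split.
  by apply/andP; split => //; apply: ltW.
split; last split => //.
  apply: IH; exists (fun i => l' i / s), z'; split => //.
  - by move=> i; apply: divr_ge0 => //; apply: ltW.
  - rewrite -mulr_suml; have -> : \sum_i l' i = s by rewrite /s; lra.
    by rewrite divff // gt_eqF.
  - by move=> i; apply: Kz.
rewrite -/s scaler_sumr; congr (_ + _); apply: eq_bigr => i _.
by rewrite scalerA mulrC -mulrA mulVf ?mulr1 // gt_eqF.
Qed.

Lemma Cc_Sf k x : Cc K k x -> Sf k.+1 x.
Proof.
elim: k x => [|k IH] x /=.
  move=> Kx; exists (fun=> 1), (fun=> x); split => //.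
  - by rewrite big_ord1.
  - by rewrite big_ord1 scale1r.
case=> t [p [z [/andP [t0 t1] [Cp [Kz ->]]]]].
have [l [zz [l0 l1 Kzz ->]]] := IH p Cp.
exists (fun i : 'I_k.+2 => if (i < k.+1)%N then (1 - t) * l (inord i) else t).
exists (fun i : 'I_k.+2 => if (i < k.+1)%N then zz (inord i) else z).
split.
- by move=> i; case: ifP => // _; apply: mulr_ge0 => //; lra.
- rewrite big_ord_recr /=.
  under eq_bigr => i _ do rewrite /= ltn_ord inord_val.
  case: ifP => [|_]; first by rewrite ltnn.
  by rewrite -mulr_sumr l1 mulr1 subrK.
- by move=> i; case: ifP.
- rewrite (big_ord_recr k.+1) /=.
  under [in RHS]eq_bigr => i _ do rewrite /= ltn_ord inord_val.
  case: ifP => [|_]; first by rewrite ltnn.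
  rewrite scaler_sumr; congr (_ + _); apply: eq_bigr => i _.
  by rewrite scalerA.
Qed.

Lemma Sf_reduce k x : (m.+1 < k.+1)%N -> Sf k.+1 x -> Sf k x.
Proof.
move=> hk [l [z [l0 l1 Kz ->]]].
pose Mt : 'M[R]_(k.+1, 1 + m) := \matrix_i row_mx (const_mx 1 : 'rV[R]_1) (z i).
have nf : ~~ row_free Mt.
  rewrite /row_free; apply/negP => /eqP hr.
  by have := rank_leq_col Mt; rewrite hr add1n leqNgt hk.
have [mu mu0 muM] : exists2 mu : 'rV[R]_k.+1, mu != 0 & mu *m Mt = 0.
  move: nf; rewrite -kermx_eq0 => /negP nk.
  case: (boolP [exists i, row i (kermx Mt) != 0]).
    move=> /existsP [i hi]; exists (row i (kermx Mt)) => //.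
    by rewrite -row_mul mulmx_ker row0.
  move=> /existsPn H; exfalso; apply: nk; apply/eqP/row_matrixP => i.
  by rewrite row0; apply/eqP; rewrite -[_ == _]negbK H.
have hsum : \sum_i mu 0 i = 0.
  have := congr1 (fun M : 'rV[R]_(1 + m) => M 0 (lshift m 0)) muM.
  rewrite /= !mxE => H; apply: etrans H; apply: eq_bigr => i _.
  by rewrite mxE row_mxEl mxE mulr1.
have hvec : \sum_i mu 0 i *: z i = 0.
  apply/rowP => j; rewrite summxE mxE.
  have := congr1 (fun M : 'rV[R]_(1 + m) => M 0 (rshift 1 j)) muM.
  rewrite /= !mxE => H; apply: etrans H; apply: eq_bigr => i _.
  by rewrite mxE; congr (_ * _); rewrite mxE row_mxEr.
have [i1 hi1] : exists i, 0 < mu 0 i.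
  case: (boolP [exists i, 0 < mu 0 i]) => [/existsP //| /existsPn H].
  exfalso; move/negP: mu0; apply; apply/eqP.
  have Hn i : 0 <= - mu 0 i by rewrite oppr_ge0 leNgt H.
  have Hs : \sum_i - mu 0 i = 0 by rewrite sumrN hsum oppr0.
  have H0 := psumr_eq0P (fun i _ => Hn i) Hs.
  by apply/rowP => i2; rewrite mxE; apply/eqP; rewrite -oppr_eq0 H0.
case: (@arg_minP _ _ _ i1 (fun i : 'I_k.+1 => 0 < mu 0 i) (fun i => l i / mu 0 i) hi1) => i0 hi0 hmin.
set t := l i0 / mu 0 i0.
have t0 : 0 <= t by apply: divr_ge0; [exact: l0 | exact: ltW].
pose l' i := l i - t * mu 0 i.
have l'0 i : 0 <= l' i.
  rewrite /l' subr_ge0; case: (ltrP 0 (mu 0 i)) => hm.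
    by have := hmin i hm; rewrite /= ler_pdivlMr.
  by apply: le_trans (l0 i); rewrite mulr_ge0_le0.
have l'i0 : l' i0 = 0.
  by rewrite /l' /t divfK ?subrr // gt_eqF.
have sl' : \sum_i l' i = 1.
  by rewrite /l' sumrB -mulr_sumr hsum mulr0 subr0.
have sx : \sum_i l' i *: z i = \sum_i l i *: z i.
  rewrite /l'; under eq_bigr => i _ do rewrite scalerBl -scalerA.
  by rewrite sumrB -scaler_sumr hvec scaler0 subr0.
exists (fun j => l' (lift i0 j)), (fun j => z (lift i0 j)); split => //.
- by move: sl'; rewrite (bigD1_ord i0) //= l'i0 add0r.
- by rewrite -sx (bigD1_ord i0) //= l'i0 scale0r add0r.
Qed.

Lemma Cara : K !=set0 -> Cc K m.+1 `<=` Cc K m.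
Proof.
move=> K0 x /Cc_Sf /Sf_reduce H.
by apply: Sf_Cc => //; apply: H.
Qed.

End Cara.
Section Separation.
Variables (R : realType) (m : nat) (K : set 'rV[R]_m).

Lemma sum_cont (s : seq 'I_m) (F : 'I_m -> 'rV[R]_m -> R) :
  (forall j, continuous (F j)) -> continuous (fun p => \sum_(j <- s) F j p).
Proof.
move=> HF; elim: s => [|j s IH].
  under eq_fun do rewrite big_nil; exact: cst_continuous.
under eq_fun do rewrite big_cons.
by move=> p; apply: continuousD; [exact: HF | exact: IH].
Qed.

Lemma dist_cont (w : 'rV[R]_m) : continuous (fun p : 'rV[R]_m => dotv (w - p) (w - p)).
Proof.
have -> : (fun p : 'rV[R]_m => dotv (w - p) (w - p)) =
   (fun p : 'rV[R]_m => \sum_(j <- index_enum 'I_m) (w - p) 0 j * (w - p) 0 j).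
  by apply/funext => p; rewrite dotvE.
apply: sum_cont => j.
have cj : continuous (fun p : 'rV[R]_m => (w - p) 0 j).
  have -> : (fun p : 'rV[R]_m => (w - p) 0 j) = (fun p => w 0 j - p 0 j).
    by apply/funext => p; rewrite !mxE.
  move=> p; apply: continuousB; first exact: cst_continuous.
  exact: coord_continuous.
by move=> p; apply: continuousM; apply: cj.
Qed.

Lemma small_t (a b : R) : 0 <= b -> (forall t, 0 < t <= 1 -> 2 * a <= t * b) -> a <= 0.
Proof.
move=> b0 H; rewrite leNgt; apply/negP => a0.
have ab0 : 0 < a + b by lra.
set u := a / (a + b).
have u0 : 0 < u by apply: divr_gt0.
have hu : u * (a + b) = a by rewrite /u divfK // gt_eqF.
have u1 : u <= 1 by rewrite /u ler_pdivrMr // mul1r; lra.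
have := H u; rewrite u0 u1 => /(_ erefl) h.
nra.
Qed.

Lemma in_hull (w : 'rV[R]_m) : compact K -> K !=set0 ->
  (forall c, exists2 z, K z & dotv c w <= dotv c z) -> Cc K m w.
Proof.
move=> cK K0 Hsup.
have [p Ap Hp] := EVT_min_rV (Cc_nonempty m K0) (@Cc_compact _ _ _ m cK)
   (continuous_subspaceT (@dist_cont w)).
move: Ap; rewrite inE => Cp.
set c := w - p.
have key z : K z -> dotv c (z - p) <= 0.
  move=> Kz; apply: (small_t (dotv_ge0 (z - p))) => t /andP [t0 t1].
  have Cq : Cc K m ((1 - t) *: p + t *: z).
    apply: Cara => //=; exists t, p, z; split => //.
    by apply/andP; split => //; apply: ltW.
  have := Hp _ (mem_set Cq).
  have -> : w - ((1 - t) *: p + t *: z) = c - t *: (z - p).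
    by apply/rowP => j; rewrite /c !mxE; ring.
  rewrite !dotvBl !dotvBr !dotvZl !dotvZr !dotvBl !dotvBr.
  rewrite (dotvC p w) (dotvC z w) (dotvC z p).
  nra.
have [z0 Kz0 hz0] := Hsup c.
have h1 := key z0 Kz0.
rewrite dotvBr in h1.
have hc : dotv c c <= 0 by rewrite {2}/c dotvBr; lra.
have c0 : c = 0 by apply: dotv_eq0; apply/eqP; rewrite eq_le hc dotv_ge0.
by move/eqP: c0; rewrite subr_eq0 => /eqP ->.
Qed.

End Separation.
Lemma norm_le_sqrt (R : realType) p (x : 'rV[R]_p) : `|x| <= Num.sqrt (dotv x x).
Proof.
have := norm_le_dot x; rewrite -ler_sqrt ?exprn_ge0 ?normr_ge0 //.
rewrite sqrtr_sqr normr_id; first by apply.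
exact: dotv_ge0.
Qed.

Section Spectral.
Variables (R : realType) (n m : nat) (G : Type) (mul : G -> G -> G) (one : G)
  (inv : G -> G) (act : G -> 'rV[R]_m -> 'rV[R]_m)
  (gamma : 'rV[R]_n -> 'rV[R]_m) (A : Type) (Lambda : A -> 'rV[R]_m -> 'rV[R]_n)
  (tau : 'rV[R]_m -> 'rV[R]_m) (a0 : A).
Hypotheses (Hgrp : is_group mul one inv)
  (Hact : is_isometric_linear_action mul one act)
  (HlinL : forall a, is_linear_map (Lambda a))
  (HisoL : forall a, is_isometry (Lambda a))
  (Htauinv : S_invariant act tau) (Htauorb : forall x, Defs.orbit act x (tau x))
  (HgL : forall a x, gamma (Lambda a x) = tau x)
  (HC : forall X, exists a, X = Lambda a (gamma X))
  (HD : forall X Y, dotv X Y <= dotv (gamma X) (gamma Y)).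

Lemma act_lin s : is_linear_map (act s).
Proof. by case: Hact. Qed.

Lemma act_dot s x y : dotv (act s x) (act s y) = dotv x y.
Proof. by case: Hact => _ _ hl hi; apply: isometry_dot. Qed.

Lemma act_inv s x : act s (act (inv s) x) = x.
Proof.
case: Hgrp => _ _ hinv; case: Hact => h1 hm _ _.
by rewrite -hm (hinv s).2 h1.
Qed.

Lemma act_inv' s x : act (inv s) (act s x) = x.
Proof.
case: Hgrp => _ _ hinv; case: Hact => h1 hm _ _.
by rewrite -hm (hinv s).1 h1.
Qed.

Lemma tau_act x : exists s, tau x = act s x.
Proof. by have [s _ h] := Htauorb x; exists s. Qed.

Lemma L_dot a x y : dotv (Lambda a x) (Lambda a y) = dotv x y.
Proof. exact: isometry_dot. Qed.

Lemma tau_gamma X : tau (gamma X) = gamma X.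
Proof. by have [a ha] := HC X; rewrite -(HgL a) -ha. Qed.

Lemma HD' x y : dotv x y <= dotv (tau x) (tau y).
Proof. by have := HD (Lambda a0 x) (Lambda a0 y); rewrite !HgL L_dot. Qed.

Lemma gamma_norm X : dotv (gamma X) (gamma X) = dotv X X.
Proof. by have [a ha] := HC X; rewrite [in RHS]ha L_dot. Qed.

Lemma gamma_lip X Y :
  dotv (gamma X - gamma Y) (gamma X - gamma Y) <= dotv (X - Y) (X - Y).
Proof.
rewrite !dotvBl !dotvBr !gamma_norm (dotvC (gamma Y)) (dotvC Y).
have := HD X Y; lra.
Qed.

Lemma gamma_cont : continuous gamma.
Proof. exact: lip_cont gamma_lip. Qed.

Lemma L_cont a : continuous (Lambda a).
Proof.
apply: lip_cont => x y; rewrite -linearB' // L_dot; exact: lexx.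
Qed.

Lemma tau_cont : continuous tau.
Proof.
have -> : tau = gamma \o Lambda a0 by apply/funext => x /=; rewrite HgL.
apply: lip_cont => x y /=; apply: le_trans (gamma_lip _ _) _.
rewrite -linearB' // L_dot; exact: lexx.
Qed.

Lemma hull_key (g w : 'rV[R]_m) : tau g = g ->
  (forall c, dotv c w <= dotv (tau c) g) -> Cc [set x | tau x = g] m w.
Proof.
move=> tg Hw; set Kg := [set x | tau x = g].
have memK x : Kg x -> exists s, x = act s g.
  rewrite /Kg /= => tx; have [s hs] := tau_act x.
  by exists (inv s); rewrite -tx hs act_inv'.
apply: in_hull.
- apply: bounded_closed_compact.
    exists (Num.sqrt (dotv g g)); split; first by rewrite num_real.
    move=> M hM x /memK [s ->]; apply: le_trans (norm_le_sqrt _) _.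
    by rewrite act_dot; apply: ltW.
  have -> : Kg = tau @^-1` [set g] by [].
  move: (tau_cont); rewrite continuous_closedP; apply.
  apply: compact_closed; first exact: norm_hausdorff.
  exact: compact_set1.
- by exists g.
- move=> c; have [s hs] := tau_act c.
  exists (act (inv s) g).
    by rewrite /Kg /= Htauinv.
  by rewrite -[X in _ <= X](act_dot s) act_inv -hs.
Qed.

Local Open Scope ereal_scope.

Lemma phi_tau (phi : 'rV[R]_m -> \bar R) : S_invariant act phi ->
  forall x, phi (tau x) = phi x.
Proof. by move=> Hphi x; have [s ->] := tau_act x; rewrite Hphi. Qed.

Lemma conv_fwd (phi : 'rV[R]_m -> \bar R) : S_invariant act phi ->
  econvex (phi \o gamma) -> econvex phi.
Proof.
move=> Hphi Hc x y al dx dy al01.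
have e z : phi z = (phi \o gamma) (Lambda a0 z) by rewrite /= HgL phi_tau.
rewrite (e (al *: x + (1 - al) *: y)%R) (e x) (e y); rewrite /edom /= in dx dy.
rewrite (HlinL a0) (linearZ' (HlinL a0)).
by apply: Hc => //; rewrite /edom /= HgL phi_tau.
Qed.

Lemma conv_back (phi : 'rV[R]_m -> \bar R) : (forall x, phi x != -oo) ->
  S_invariant act phi -> econvex phi -> econvex (phi \o gamma).
Proof.
move=> Hninf Hphi Hc X Y al dX dY al01.
rewrite /edom /= in dX dY; rewrite /=.
set Z := (al *: X + (1 - al) *: Y)%R.
have [b hb] := HC Z.
set L := adj (Lambda b).
have hgZ : gamma Z = (al *: L X + (1 - al) *: L Y)%R.
  rewrite -(adj_iso (HlinL b) (HisoL b) (gamma Z)) -hb /Z /L adj_lin.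
  by rewrite /adj -scalemxAl.
have key W : phi (L W) <= phi (gamma W).
  case: (eqVneq (phi (gamma W)) +oo) => [->|hf]; first exact: leey.
  have [r hr] : exists r : R, phi (gamma W) = r%:E.
    move: (Hninf (gamma W)) hf; case: (phi (gamma W)) => [r _ _| // | //].
    by exists r.
  rewrite hr; apply: (@Cc_jensen R m [set x | tau x = gamma W] phi r Hc _ m).
    by move=> z /= tz; rewrite -hr -tz phi_tau.
  apply: hull_key; first exact: tau_gamma.
  by move=> c; rewrite adjP // -(HgL b c); apply: HD.
have lX := key X; have lY := key Y.
have dLX : edom phi (L X) by rewrite /edom /=; apply: le_lt_trans lX _.
have dLY : edom phi (L Y) by rewrite /edom /=; apply: le_lt_trans lY _.
rewrite hgZ; apply: le_trans (Hc _ _ _ dLX dLY al01) _.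
case/andP: al01 => a0' a1.
apply: leeD; apply: lee_wpmul2l => //; rewrite lee_fin; lra.
Qed.

End Spectral.
Theorem theorem4p6 (R : realType) (n m : nat)
    (G : Type) (mul : G -> G -> G) (one : G) (inv : G -> G)
    (act : G -> 'rV[R]_m -> 'rV[R]_m)
    (gamma : 'rV[R]_n -> 'rV[R]_m) (A : Type)
    (Lambda : A -> 'rV[R]_m -> 'rV[R]_n)
    (phi : 'rV[R]_m -> \bar R) :
  spectral_decomposition_system mul one inv act gamma Lambda ->
  (forall x, phi x != -oo%E) ->
  S_invariant act phi ->
  (econvex (phi \o gamma) <-> econvex phi) /\
  (eproper phi -> (Gamma0 (phi \o gamma) <-> Gamma0 phi)).
Proof.
move=> [Hgrp Hact HlinL [HisoL [tau [Htauinv Htauorb HgL]] HC HD]] Hninf Hphi.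
have [a0 _] := HC 0.
have conv : econvex (phi \o gamma) <-> econvex phi.
  split.
    exact: (conv_fwd a0 HlinL Htauorb HgL Hphi).
  exact: (conv_back a0 Hgrp Hact HlinL HisoL Htauinv Htauorb HgL HC HD Hninf Hphi).
split => // Hprop.
have e z : phi z = phi (gamma (Lambda a0 z)).
  by rewrite HgL (phi_tau Htauorb Hphi).
split.
- case=> [[_ _] lsc cvx]; split => //; last exact: conv.1.
  move=> x a ha; rewrite e in ha; have [V hV hVa] := lsc _ _ ha.
  exists (Lambda a0 @^-1` V).
    have hc := @L_cont _ _ _ _ _ HlinL HisoL a0 x; exact: hc.
  by move=> y /= Vy; rewrite e; exact: hVa.
- case=> [[hn [x0 hx0]] lsc cvx]; split; last exact: conv.2.
    split; first by move=> X; exact: Hninf.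
    exists (Lambda a0 x0).
    by rewrite /edom /= -e.
  move=> X a ha; have [V hV hVa] := lsc _ _ ha.
  exists (gamma @^-1` V); last by move=> y /= Vy; exact: hVa.
  have hc := @gamma_cont _ _ _ _ _ _ HlinL HisoL HC HD X; exact: hc.
Qed.
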